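(* Let $q$ be a prime power, $V$ a $v$-dimensional vector space over $\mathrm{GF}(q)$, $\mathcal{G}$ a $(g-1)$-spread of $V$, and let $G$ be a subgroup of the stabilizer of $\mathcal{G}$ in $\mathrm{P\Gamma L}(v,q)$ (acting on the subspaces of $V$). Suppose $G$ acts transitively on the set of $2$-dimensional subspaces of $V$ that are not contained in any element of $\mathcal{G}$. Let $k\ge 2$ and let $\mathcal{B}$ be any union of $G$-orbits on the set of $k$-dimensional subspaces of $V$ that are scattered with respect to $\mathcal{G}$. Then there is an integer $\lambda$ such that every $2$-dimensional subspace of $V$ not contained in any element of $\mathcal{G}$ is contained in exactly $\lambda$ elements of $\mathcal{B}$; that is, $(V,\mathcal{G},\mathcal{B})$ is a $(v,g,k,\lambda)_q$-GDD for a suitable value $\lambda$.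
   Context: A $(g-1)$-spread of $V$ is a set of $g$-dimensional subspaces of $V$ such that every $1$-dimensional subspace of $V$ lies in exactly one of them. A subspace $B\le V$ is scattered with respect to $\mathcal{G}$ if $B$ contains no $2$-dimensional subspace contained in an element of $\mathcal{G}$. A $(v,g,k,\lambda)_q$-GDD is a triple $(V,\mathcal{G},\mathcal{B})$ with $V$ a $v$-dimensional $\mathrm{GF}(q)$-space, $\mathcal{G}$ a $(g-1)$-spread of $V$ with $\#\mathcal{G}>1$, $\mathcal{B}$ a set of $k$-dimensional subspaces of $V$, such that every $2$-dimensional subspace of $V$ is either contained in an element of $\mathcal{G}$ and in no element of $\mathcal{B}$, or in no element of $\mathcal{G}$ and in exactly $\lambda$ elements of $\mathcal{B}$. *)

(* Defs.v *)
From HB Require Import structures.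
From mathcomp Require Import all_boot all_order all_algebra all_field.
Set Implicit Arguments. Unset Strict Implicit. Unset Printing Implicit Defensive.
Import GRing.Theory.
Local Open Scope ring_scope.

Section Defs.
Variables (F : fieldType) (vT : vectType F).

Definition is_semilinear_map (f : vT -> vT) : Prop :=
  exists sigma : {rmorphism F -> F},
    bijective sigma /\ forall (a : F) (x y : vT), f (a *: x + y) = sigma a *: f x + f y.

Definition maps_onto (f : vT -> vT) (U W : {vspace vT}) : Prop :=
  forall y, y \in W <-> exists2 x, x \in U & f x = y.

(* S is a (g-1)-spread: a set of g-dimensional subspaces such that every
   1-dimensional subspace lies in exactly one of them *)
Definition is_spread (g : nat) (S : {vspace vT} -> Prop) : Prop :=
  (forall X, S X -> \dim X = g) /\
  (forall P : {vspace vT}, \dim P = 1%N -> exists! X, S X /\ (P <= X)%VS).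

Definition in_spread_elt (S : {vspace vT} -> Prop) (L : {vspace vT}) : Prop :=
  exists X, S X /\ (L <= X)%VS.

Definition scattered (S : {vspace vT} -> Prop) (U : {vspace vT}) : Prop :=
  forall L : {vspace vT}, (L <= U)%VS -> \dim L = 2%N -> ~ in_spread_elt S L.

Definition count_exactly (P : {vspace vT} -> Prop) (lam : nat) : Prop :=
  exists s : seq {vspace vT}, [/\ uniq s, size s = lam & forall X, X \in s <-> P X].

Definition gdd_blocks (S B : {vspace vT} -> Prop) (lam : nat) : Prop :=
  forall L : {vspace vT}, \dim L = 2%N ->
    (in_spread_elt S L -> forall X, B X -> ~ (L <= X)%VS) /\
    (~ in_spread_elt S L -> count_exactly (fun X => B X /\ (L <= X)%VS) lam).

End Defs.

(* Main.v *)
Require Import Defs.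
From HB Require Import structures.
From mathcomp Require Import all_boot all_order all_algebra all_field.
From Stdlib Require Import Classical ClassicalEpsilon.
Local Open Scope ring_scope.
Import GRing.Theory VectorInternalTheory.

Section Img.
Variables (F : fieldType) (vT : vectType F).

Lemma sl_sum {f : vT -> vT} {sigma : {rmorphism F -> F}} :
  (forall (a : F) (x y : vT), f (a *: x + y) = sigma a *: f x + f y) ->
  forall n (c : 'I_n -> F) (u : 'I_n -> vT),
  f (\sum_i c i *: u i) = \sum_i sigma (c i) *: f (u i).
Proof.
move=> H.
have f0 : f 0 = 0.
  have := H 1 0 0; rewrite scaler0 addr0 rmorph1 scale1r => E.
  by apply: (addrI (f 0)); rewrite addr0 -E.
have fadd x y : f (x + y) = f x + f y by have := H 1 x y; rewrite rmorph1 !scale1r.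
have fsc a x : f (a *: x) = sigma a *: f x by have := H a x 0; rewrite !addr0 f0 addr0.
move=> n c u; apply: (big_ind2 (fun a b => f a = b)) => //.
by move=> x1 x2 y1 y2 <- <-; rewrite fadd.
Qed.

Definition img (f : vT -> vT) (X : {vspace vT}) : {vspace vT} :=
  <<map f (vbasis X)>>%VS.

Lemma imgP f X : is_semilinear_map f -> maps_onto f X (img f X).
Proof.
case=> sigma [[g sg gs] H] y; split.
- move=> yW.
  pose fb := map_tuple f (vbasis X).
  have := coord_span (X := fb) yW => ->.
  exists (\sum_i g (coord fb i y) *: (vbasis X)`_i).
    apply: memv_suml => i _; apply: memvZ; apply: vbasis_mem.
    by apply: mem_nth; rewrite size_tuple.
  rewrite (sl_sum H); apply: eq_bigr => i _; rewrite gs.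
  by rewrite /fb /= (nth_map 0) // size_tuple.
- case=> x xX <-.
  rewrite (coord_vbasis xX) (sl_sum H).
  apply: memv_suml => i _; apply: memvZ; apply: memv_span.
  rewrite -(nth_map _ 0); first by apply: mem_nth; rewrite size_map size_tuple.
  by rewrite size_tuple.
Qed.

Lemma img_inj f : is_semilinear_map f -> injective f -> injective (img f).
Proof.
move=> sf fi X1 X2 E.
have sub : forall Y1 Y2, img f Y1 = img f Y2 -> (Y1 <= Y2)%VS.
  move=> Y1 Y2 E'; apply/subvP => x xY.
  have : f x \in img f Y1 by apply/(imgP f Y1 sf); exists x.
  by rewrite E' => /(imgP f Y2 sf) [x' x'Y /fi <-].
by apply: subv_anti; rewrite !sub.
Qed.

End Img.
Arguments img {F vT}.
Arguments imgP {F vT}.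
Arguments img_inj {F vT}.


Section Count.
Variables (F : finFieldType) (vT : vectType F).

Lemma count_ex (P : {vspace vT} -> Prop) : exists n, count_exactly P n.
Proof.
pose pb X : bool := if excluded_middle_informative (P X) then true else false.
pose s := undup [seq X <- map (fun A : 'M[F]_(dim vT) => mx2vs A) (enum 'M[F]_(dim vT)) | pb X].
exists (size s); exists s; split => //; first exact: undup_uniq.
move=> X; rewrite mem_undup mem_filter /pb.
case: excluded_middle_informative => //= PX; split => // _.
by rewrite -[X]vs2mxK; apply: map_f; rewrite mem_enum.
Qed.
End Count.
Arguments count_ex {F vT}.

Theorem lemma11 (F : finFieldType) (v g k : nat)
  (S : {vspace 'rV[F]_v} -> Prop)
  (Gp : ('rV[F]_v -> 'rV[F]_v) -> Prop)
  (B : {vspace 'rV[F]_v} -> Prop) :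
  is_spread g S ->
  (* Gp is a group of semilinear bijections (the preimage in GammaL(v,q) of
     the subgroup G of PGammaL(v,q)) *)
  (forall f, Gp f -> is_semilinear_map f /\ bijective f) ->
  Gp id ->
  (forall f h, Gp f -> Gp h -> Gp (f \o h)) ->
  (forall f, Gp f -> exists h, [/\ Gp h, cancel f h & cancel h f]) ->
  (* G stabilizes the spread *)
  (forall f X W, Gp f -> maps_onto f X W -> S X -> S W) ->
  (* G is transitive on the 2-subspaces not contained in a spread element *)
  (forall L1 L2 : {vspace 'rV[F]_v}, \dim L1 = 2%N -> \dim L2 = 2%N ->
     ~ in_spread_elt S L1 -> ~ in_spread_elt S L2 ->
     exists f, Gp f /\ maps_onto f L1 L2) ->
  (2 <= k)%N ->
  (* B is a union of G-orbits on the scattered k-subspaces *)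
  (forall X, B X -> \dim X = k /\ scattered S X) ->
  (forall f X W, Gp f -> B X -> maps_onto f X W -> B W) ->
  exists lam : nat, gdd_blocks S B lam.
Proof.
move=> _ Hsl _ _ _ _ Htr _ HB HBinv.
have key : forall L1 L2 n1 n2, \dim L1 = 2%N -> \dim L2 = 2%N ->
    ~ in_spread_elt S L1 -> ~ in_spread_elt S L2 ->
    count_exactly (fun X => B X /\ (L1 <= X)%VS) n1 ->
    count_exactly (fun X => B X /\ (L2 <= X)%VS) n2 -> (n1 <= n2)%N.
  move=> L1 L2 n1 n2 d1 d2 n1s n2s [s1 [u1 <- m1]] [s2 [u2 <- m2]].
  have [f [Gf fL]] := Htr L1 L2 d1 d2 n1s n2s.
  have [sf /bij_inj fi] := Hsl f Gf.
  have := @uniq_leq_size _ (map (img f) s1) s2; rewrite size_map; apply.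
    by rewrite map_inj_uniq //; exact: img_inj.
  move=> Y /mapP [X /m1 [BX LX] ->]; apply/m2; split.
    exact: HBinv Gf BX (imgP f X sf).
  apply/subvP => y /fL [x xL <-]; apply/(imgP f X sf); exists x => //.
  exact: (subvP LX).
have first : forall L, \dim L = 2%N -> in_spread_elt S L -> forall X, B X -> ~ (L <= X)%VS.
  move=> L dL sL X BX LX; have [_ sc] := HB X BX; exact: (sc L LX dL sL).
case: (classic (exists L0, \dim L0 = 2%N /\ ~ in_spread_elt S L0)).
- case=> L0 [d0 n0]; have [m0 c0] := count_ex (fun X => B X /\ (L0 <= X)%VS).
  exists m0 => L dL; split; first exact: first dL.
  move=> nL; have [m c] := count_ex (fun X => B X /\ (L <= X)%VS).
  suff -> : m0 = m by [].
  by apply/eqP; rewrite eqn_leq (key L0 L) // (key L L0).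
- move=> nex; exists 0%N => L dL; split; first exact: first dL.
  by move=> nL; exfalso; apply: nex; exists L.
Qed.
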